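(* Let $m\ge1$ and let $\mathcal C\subseteq\mathbb Z^m$ be a code with minimum distance $d_a(\mathcal C)=d$. Then: (i) for all non-negative integers $r^+,r^-$ with $r^++r^-<d$, $\overline\mu(\mathcal C)\le|S_m(r^+,r^-)|^{-1}$; (ii) if $2\le d\le 2m+1$, then $\overline\mu(\mathcal C)<\lceil\tfrac{d-1}{2}\rceil!\,\lfloor\tfrac{d-1}{2}\rfloor!\,\big(m+1-\lceil\tfrac{d-1}{2}\rceil\big)^{1-d}$; (iii) if $1\le m<d$, then $\overline\mu(\mathcal C)<2^m (m!)^3\,((2m)!)^{-1}(d-m)^{-m}$.
   Context: $d_a(\mathbf x,\mathbf y)=\max\{\sum_{i:x_i>y_i}(x_i-y_i),\sum_{i:x_i<y_i}(y_i-x_i)\}$ on $\mathbb Z^m$; $d_a(\mathcal C)$ is the minimum distance. $S_m(r^+,r^-)=\{\mathbf x\in\mathbb Z^m:\sum_{i:x_i>0}x_i\le r^+,\ \sum_{i:x_i<0}|x_i|\le r^-\}$. The upper density is $\overline\mu(\mathcal C)=\limsup_{k\to\infty}|\mathcal C\cap\{-k,\dots,k\}^m|/(2k+1)^m$. *)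

(* Defs.v *)
From Stdlib Require Import Reals ZArith List Classical ClassicalEpsilon.
Import ListNotations.

(* Points of Z^m are lists of integers of length m. *)

Definition interval (k : nat) : list Z :=
  map (fun i => (Z.of_nat i - Z.of_nat k)%Z) (seq 0 (2 * k + 1)).

Fixpoint box (m k : nat) : list (list Z) :=
  match m with
  | O => [[]]
  | S m' => flat_map (fun z => map (cons z) (box m' k)) (interval k)
  end.

Definition pos_sum (v : list Z) : Z := fold_right (fun a s => (Z.max a 0 + s)%Z) 0%Z v.
Definition neg_sum (v : list Z) : Z := fold_right (fun a s => (Z.max (- a) 0 + s)%Z) 0%Z v.

Definition vsub (x y : list Z) : list Z := map (fun p => (fst p - snd p)%Z) (combine x y).

Definition d_a (x y : list Z) : Z := Z.max (pos_sum (vsub x y)) (neg_sum (vsub x y)).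

Definition is_code (m : nat) (C : list Z -> Prop) : Prop :=
  forall x, C x -> length x = m.

Definition min_dist (C : list Z -> Prop) (d : nat) : Prop :=
  (forall x y, C x -> C y -> x <> y -> (Z.of_nat d <= d_a x y)%Z) /\
  (exists x y, C x /\ C y /\ x <> y /\ d_a x y = Z.of_nat d).

Definition decP (P : Prop) : bool :=
  if excluded_middle_informative P then true else false.

Definition count_in_box (m : nat) (C : list Z -> Prop) (k : nat) : nat :=
  length (filter (fun x => decP (C x)) (box m k)).

Definition density_seq (m : nat) (C : list Z -> Prop) (k : nat) : R :=
  (INR (count_in_box m C k) / INR (2 * k + 1) ^ m)%R.

Definition is_limsup (u : nat -> R) (l : R) : Prop :=
  forall eps : R, (eps > 0)%R ->
    (exists N, forall n, (n >= N)%nat -> (u n <= l + eps)%R) /\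
    (forall N, exists n, (n >= N)%nat /\ (l - eps <= u n)%R).

Definition upper_density (m : nat) (C : list Z -> Prop) (mu : R) : Prop :=
  is_limsup (density_seq m C) mu.

(* |S_m(r+, r-)|; S_m(r+,r-) lies inside {-(r++r-),...,r++r-}^m *)
Definition S_card (m rp rn : nat) : nat :=
  length (filter (fun x => (Z.leb (pos_sum x) (Z.of_nat rp) && Z.leb (neg_sum x) (Z.of_nat rn))%bool)
                 (box m (rp + rn))).

(* Main.v *)
Require Import Defs.
From Stdlib Require Import Reals ZArith List.
From Stdlib Require Import List Arith Factorial.
From mathcomp Require all_boot zify.
Module Comb.
Import all_boot zify.
Set Implicit Arguments.

Definition Fm (m p n : nat) : nat := \sum_(k < m.+1) 'C(m,k) * 'C(p,k) * 'C(m-k+n, n).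

Lemma hs1 p k : \sum_(z < p) 'C(z,k) = 'C(p,k.+1).
Proof.
elim: p => [|p IH]; first by rewrite big_ord0.
by rewrite big_ord_recr /= IH binS.
Qed.

Lemma hs2 a n : \sum_(j < n.+1) 'C(a+j, j) = 'C(a+n.+1, n).
Proof.
elim: n => [|n IH]; first by rewrite big_ord_recl big_ord0 !bin0.
by rewrite big_ord_recr /= IH (addnS a n.+1) binS addnC.
Qed.

Lemma F_rec m p n : Fm m.+1 p n = \sum_(z < p) Fm m z n + \sum_(j < n.+1) Fm m p j.
Proof.
rewrite /Fm.
have E1 : \sum_(z < p) \sum_(k < m.+1) 'C(m,k) * 'C(z,k) * 'C(m-k+n, n)
   = \sum_(k < m.+1) 'C(m,k) * 'C(p,k.+1) * 'C(m-k+n, n).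
  rewrite exchange_big; apply: eq_bigr => k _.
  by rewrite -hs1 big_distrr big_distrl; apply: eq_bigr => z _.
have E2 : \sum_(j < n.+1) \sum_(k < m.+1) 'C(m,k) * 'C(p,k) * 'C(m-k+j, j)
   = \sum_(k < m.+1) 'C(m,k) * 'C(p,k) * 'C(m-k+n.+1, n).
  rewrite exchange_big; apply: eq_bigr => k _.
  by rewrite -hs2 big_distrr.
rewrite E1 E2 big_ord_recl /=.
rewrite (big_ord_recl m (fun k => 'C(m,k) * 'C(p,k) * 'C(m-k+n.+1,n))) /=.
rewrite subn0 !bin0 !mul1n.
have E3 : \sum_(i < m.+1) 'C(m.+1, bump 0 i) * 'C(p, bump 0 i) * 'C(m.+1 - bump 0 i + n, n)
  = \sum_(k < m.+1) 'C(m,k) * 'C(p,k.+1) * 'C(m-k+n, n)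
    + \sum_(k < m.+1) 'C(m,k.+1) * 'C(p,k.+1) * 'C(m-k+n, n).
  rewrite -big_split /=; apply: eq_bigr => k _.
  by rewrite /bump /= add1n binS subSS -!mulnDl addnC.
rewrite E3 (big_ord_recr m (fun k => 'C(m,k.+1) * 'C(p,k.+1) * 'C(m-k+n, n))) /=.
rewrite (bin_small (ltnSn m)) !mul0n addn0 subn0.
have E4 : \sum_(i < m) 'C(m, i.+1) * 'C(p, i.+1) * 'C(m - i + n, n)
  = \sum_(i < m) 'C(m, bump 0 i) * 'C(p, bump 0 i) * 'C(m - bump 0 i + n.+1, n).
  apply: eq_bigr => [[i Hi]] _ /=; rewrite /bump /= add1n addnS -addSn subnSK //.
rewrite E4 !addnA; congr (_ + _); rewrite addnC addnS -addSn.
by [].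
Qed.

Lemma expn_le a b k : a <= b -> a^k <= b^k.
Proof. by move=> h; case: k => // k; rewrite leq_exp2r. Qed.

Lemma ffact_lb n k : (n.+1 - k)^k <= n ^_ k.
Proof.
elim: k n => [|k IH] n; first by [].
case: n => [|n]; first by rewrite subSS sub0n exp0n.
rewrite ffactSS subSS expnS; apply: leq_mul; first exact: leq_subr.
exact: IH.
Qed.

Lemma fact_bin_lb p k : (p.+1 - k)^k <= k`! * 'C(p,k).
Proof. by rewrite mulnC bin_ffact; apply: ffact_lb. Qed.

Lemma sum_lt (f g : nat -> nat) m : f 0 < g 0 -> (forall k, k <= m -> f k <= g k) ->
  \sum_(k < m.+1) f k < \sum_(k < m.+1) g k.
Proof.
move=> h0 h; rewrite !big_ord_recl /=.
have : \sum_(i < m) f (bump 0 i) <= \sum_(i < m) g (bump 0 i).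
  by apply: leq_sum => [[i Hi]] _; apply: h; rewrite /bump /=; lia.
by move=> H; rewrite -addSn; apply: leq_add.
Qed.

Lemma Fm_pos m p n : 0 < Fm m p n.
Proof.
rewrite /Fm big_ord_recl /= bin0 bin0 !mul1n subn0.
have : 0 < 'C(m + n, n) by rewrite bin_gt0; lia.
lia.
Qed.

Lemma ii_bound m a b : 0 < a <= m -> (m.+1 - a)^(a+b) < a`! * b`! * Fm m a b.
Proof.
move=> /andP [a0 am].
have T0 : 0 < 'C(m + b, b) by rewrite bin_gt0; lia.
have Ta : 'C(m,a) * 'C(a,a) * 'C(m-a+b,b) <= \sum_(i < m) 'C(m, bump 0 i) * 'C(a, bump 0 i) * 'C(m - bump 0 i + b, b).
  have ha : a.-1 < m by lia.
  rewrite (bigD1 (Ordinal ha)) //= /bump /=.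
  have -> : 1 + a.-1 = a by lia.
  exact: leq_addr.
have L1 := fact_bin_lb m a.
have L2 := fact_bin_lb (m - a + b) b.
have E : (m - a + b).+1 - b = m.+1 - a by lia.
rewrite E in L2.
rewrite /Fm big_ord_recl /= bin0 bin0 !mul1n subn0 binn muln1 in Ta *.
rewrite expnD.
have : (m.+1 - a) ^ a * (m.+1 - a) ^ b <= a`! * b`! * ('C(m, a) * 'C(m - a + b, b)).
  by rewrite -mulnACA; apply: leq_mul.
move=> H.
apply: (leq_ltn_trans H).
rewrite mulnDr; apply: (leq_ltn_trans (leq_mul (leqnn _) Ta)).
by rewrite -[X in X < _]add0n ltn_add2r !muln_gt0 !fact_gt0.
Qed.

Lemma binq_lb m k n : (n.+1)^(m-k) <= (m-k)`! * 'C(m-k+n, n).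
Proof.
have E : 'C(m-k+n, n) = 'C(m-k+n, m-k).
  by rewrite -[LHS](bin_sub (leq_addl (m-k) n)) addnK.
rewrite E; have := fact_bin_lb (m-k+n) (m-k).
by have -> : (m - k + n).+1 - (m - k) = n.+1 by lia.
Qed.

Lemma term_le m p n t k : k <= m -> t < (n.+1).*2 -> t <= (p.+1 - m).*2 ->
  t^m <= 2^m * ((k`! * 'C(p,k)) * ((m-k)`! * 'C(m-k+n, n))).
Proof.
move=> km tn tp.
have L1 := fact_bin_lb p k.
have L2 := binq_lb m k n.
have H1 : t^k <= 2^k * (k`! * 'C(p,k)).
  apply: (leq_trans _ (leq_mul (leqnn _) L1)).
  rewrite -expnMn; apply: expn_le; lia.
have H2 : t^(m-k) <= 2^(m-k) * ((m-k)`! * 'C(m-k+n, n)).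
  apply: (leq_trans _ (leq_mul (leqnn _) L2)).
  rewrite -expnMn; apply: expn_le; lia.
have -> : m = k + (m - k) by lia.
rewrite addKn !expnD mulnACA; exact: leq_mul.
Qed.

Lemma term_lt0 m p n t : 0 < m -> t < (n.+1).*2 ->
  t^m < 2^m * ((0`! * 'C(p,0)) * ((m-0)`! * 'C(m-0+n, n))).
Proof.
move=> m0 tn.
have L2 := binq_lb m 0 n.
rewrite bin0 muln1 subn0 in L2 *; change (0`!) with 1; rewrite mul1n.
apply: (leq_trans _ (leq_mul (leqnn _) L2)).
rewrite -expnMn ltn_exp2r //; lia.
Qed.

Lemma vdm m : 'C(m.*2, m) = \sum_(k < m.+1) 'C(m,k) ^ 2.
Proof.
rewrite -addnn -Vandermonde; apply: eq_bigr => [[k Hk]] _ /=.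
by rewrite bin_sub // expnS expn1.
Qed.

Lemma iii_bound m p n t : 0 < m -> t < (n.+1).*2 -> t <= (p.+1 - m).*2 ->
  (m.*2)`! * t^m < 2^m * m`!^3 * Fm m p n.
Proof.
move=> m0 tn tp.
have E1 : (m.*2)`! * t^m = \sum_(k < m.+1) m`!^2 * 'C(m,k)^2 * t^m.
  have := bin_fact (leq_addl m m); rewrite addnK addnn vdm => <-.
  rewrite big_distrl /= big_distrl /=; apply: eq_bigr => k _; lia.
have E2 : 2^m * m`!^3 * Fm m p n = \sum_(k < m.+1) m`!^2 * 'C(m,k)^2 *
     (2^m * ((k`! * 'C(p,k)) * ((m-k)`! * 'C(m-k+n, n)))).
  rewrite /Fm big_distrr /=; apply: eq_bigr => [[k Hk]] _ /=.
  have := bin_fact (Hk : k <= m).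
  move: (m`!) => M <-. lia.
rewrite E1 E2; apply: (sum_lt (fun k => m`!^2 * 'C(m,k)^2 * t^m)
   (fun k => m`!^2 * 'C(m,k)^2 * (2^m * ((k`! * 'C(p,k)) * ((m-k)`! * 'C(m-k+n, n)))))).
  rewrite /= bin0 exp1n muln1 ltn_pmul2l; last by rewrite expn_gt0 fact_gt0.
  exact: term_lt0.
move=> k km /=; apply: leq_mul => //; exact: term_le.
Qed.

Lemma fact_eq n : fact n = n`!.
Proof. elim: n => [|n IH] //; rewrite factS -IH. by []. Qed.

Lemma pow_eq a b : Nat.pow a b = expn a b.
Proof. elim: b => [|b IH] //; rewrite expnS -IH. by []. Qed.

Lemma sum_list_gen (f : nat -> nat) a n : \sum_(a <= i < a + n) f i = list_sum (List.map f (List.seq a n)).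
Proof.
elim: n a => [|n IH] a; first by rewrite addn0 big_geq.
rewrite big_ltn; last by lia.
by rewrite -addSnnS IH.
Qed.

Lemma sum_list (f : nat -> nat) n : \sum_(i < n) f i = list_sum (List.map f (List.seq 0 n)).
Proof. by rewrite -(big_mkord xpredT) -sum_list_gen. Qed.

Lemma F_rec_std m p n : Fm (S m) p n =
  list_sum (List.map (fun z => Fm m z n) (List.seq 0 p)) +
  list_sum (List.map (fun j => Fm m p j) (List.seq 0 (S n))).
Proof. by rewrite F_rec (sum_list (fun z => Fm m z n)) sum_list. Qed.

Lemma F0_std p n : Fm 0 p n = 1.
Proof. by rewrite /Fm big_ord_recl big_ord0 /= !bin0 binn. Qed.

Lemma Fm_pos_std m p n : (0 < Fm m p n)%coq_nat.
Proof. apply/ltP; exact: Fm_pos. Qed.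

Lemma ii_std m a b : (0 < a)%coq_nat -> (a <= m)%coq_nat ->
  (Nat.pow (S m - a) (a+b) < fact a * fact b * Fm m a b)%coq_nat.
Proof.
move=> /ltP h1 /leP h2; apply/ltP; rewrite pow_eq !fact_eq; apply: ii_bound.
by rewrite h1 h2.
Qed.

Lemma iii_std m p n t : (0 < m)%coq_nat -> (t < 2 * S n)%coq_nat -> (t <= 2 * (S p - m))%coq_nat ->
  (fact (2 * m) * Nat.pow t m < Nat.pow 2 m * Nat.pow (fact m) 3 * Fm m p n)%coq_nat.
Proof.
move=> /ltP h1 /ltP h2 /leP h3; apply/ltP; rewrite !pow_eq !fact_eq.
have -> : 2 * m = m.*2 by lia.
apply: iii_bound => //; lia.
Qed.

Lemma sum_rev (f : nat -> nat) p : list_sum (List.map f (List.seq 0 p)) =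
  list_sum (List.map (fun j => f (p - 1 - j)) (List.seq 0 p)).
Proof.
rewrite -!sum_list -!(big_mkord xpredT) big_nat_rev /=.
rewrite -(big_mkord xpredT (fun j => f (p - 1 - j))).
by apply: eq_big_nat => i Hi; rewrite add0n; congr f; lia.
Qed.
End Comb.
From Stdlib Require Import Reals ZArith List Lia Lra Arith Classical ClassicalEpsilon.
Import ListNotations.

Lemma in_interval k z : In z (interval k) <-> (- Z.of_nat k <= z <= Z.of_nat k)%Z.
Proof.
  unfold interval. rewrite in_map_iff. split.
  - intros [i [<- Hi]]. apply in_seq in Hi. lia.
  - intros H. exists (Z.to_nat (z + Z.of_nat k)). split.
    + rewrite Z2Nat.id; lia.
    + apply in_seq. lia.
Qed.

Definition bnd (k : nat) (z : Z) : Prop := (- Z.of_nat k <= z <= Z.of_nat k)%Z.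

Lemma in_box m k v : In v (box m k) <-> length v = m /\ Forall (bnd k) v.
Proof.
  revert v; induction m as [|m IH]; intros v; simpl.
  - split.
    + intros [<-|[]]. split; auto.
    + intros [H _]. destruct v; simpl in *; auto; discriminate.
  - rewrite in_flat_map. split.
    + intros [z [Hz Hv]]. apply in_map_iff in Hv. destruct Hv as [w [<- Hw]].
      apply IH in Hw. destruct Hw as [Hl Hf]. simpl. split; auto.
      constructor; auto. apply in_interval; auto.
    + intros [Hl Hf]. destruct v as [|z w]; simpl in Hl; [discriminate|].
      inversion Hf; subst. exists z. split. apply in_interval; auto.
      apply in_map. apply IH. split; auto.
Qed.

Lemma NoDup_map_inj {A B} (f : A -> B) l :
  (forall x y, In x l -> In y l -> f x = f y -> x = y) -> NoDup l -> NoDup (map f l).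
Proof.
  induction l as [|a l IH]; intros Hinj Hnd; simpl; constructor.
  - intros Hin. apply in_map_iff in Hin. destruct Hin as [y [Hy Hyl]].
    inversion Hnd; subst. assert (y = a) by (apply Hinj; simpl; auto). subst; auto.
  - inversion Hnd; subst. apply IH; auto. intros; apply Hinj; simpl; auto.
Qed.

Lemma NoDup_flat_map' {A B} (f : A -> list B) l :
  NoDup l -> (forall x, In x l -> NoDup (f x)) ->
  (forall x y b, In x l -> In y l -> In b (f x) -> In b (f y) -> x = y) ->
  NoDup (flat_map f l).
Proof.
  induction l as [|a l IH]; intros Hnd Hf Hd; simpl; [constructor|].
  inversion Hnd; subst. apply NoDup_app.
  - apply Hf; simpl; auto.
  - apply IH; auto. intros; apply Hf; simpl; auto. intros; eapply Hd; simpl; eauto.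
  - intros b Hb Hb'. apply in_flat_map in Hb'. destruct Hb' as [y [Hy Hby]].
    assert (a = y) by (eapply Hd; simpl; eauto). subst; auto.
Qed.

Lemma NoDup_interval k : NoDup (interval k).
Proof.
  unfold interval. apply NoDup_map_inj. intros x y _ _ H; lia. apply seq_NoDup.
Qed.

Lemma NoDup_box m k : NoDup (box m k).
Proof.
  induction m as [|m IH]; simpl. constructor; auto. constructor.
  apply NoDup_flat_map'. apply NoDup_interval.
  - intros x _. apply NoDup_map_inj; auto. intros a b _ _ H; inversion H; auto.
  - intros x y b _ _ Hx Hy. apply in_map_iff in Hx, Hy.
    destruct Hx as [u [<- _]]. destruct Hy as [w [Hw _]]. inversion Hw; auto.
Qed.

Lemma length_flat_map_const {A B} (f : A -> list B) l c :
  (forall x, In x l -> length (f x) = c) -> length (flat_map f l) = (length l * c)%nat.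
Proof.
  induction l as [|a l IH]; intros H; simpl; auto.
  rewrite length_app, H, IH; simpl; auto. intros; apply H; simpl; auto.
Qed.

Lemma length_interval k : length (interval k) = (2 * k + 1)%nat.
Proof. unfold interval. rewrite length_map, length_seq. auto. Qed.

Lemma length_box m k : length (box m k) = ((2 * k + 1) ^ m)%nat.
Proof.
  induction m as [|m IH]; simpl; auto.
  rewrite (length_flat_map_const _ _ ((2 * k + 1) ^ m)%nat).
  rewrite length_interval. replace (k + (k + 0) + 1)%nat with (2*k+1)%nat by lia. reflexivity.
  intros x _. rewrite length_map. auto.
Qed.

Definition Pred (p n : Z) (x : list Z) : bool := (Z.leb (pos_sum x) p && Z.leb (neg_sum x) n)%bool.
Definition cnt m K p n := length (filter (Pred p n) (box m K)).

Lemma S_card_cnt m rp rn : S_card m rp rn = cnt m (rp + rn) (Z.of_nat rp) (Z.of_nat rn).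
Proof. reflexivity. Qed.

Lemma pos_sum_nonneg v : (0 <= pos_sum v)%Z.
Proof. induction v; simpl; lia. Qed.
Lemma neg_sum_nonneg v : (0 <= neg_sum v)%Z.
Proof. induction v; simpl; lia. Qed.

Lemma cnt_neg m K p n : (p < 0 \/ n < 0)%Z -> cnt m K p n = 0%nat.
Proof.
  intros H. unfold cnt. rewrite (filter_ext_in _ (fun _ => false)).
  - clear. induction (box m K); simpl; auto.
  - intros x _. unfold Pred. pose proof (pos_sum_nonneg x). pose proof (neg_sum_nonneg x).
    destruct (Z.leb_spec (pos_sum x) p), (Z.leb_spec (neg_sum x) n); simpl; auto; lia.
Qed.

Lemma filter_flat_map {A B} (f : B -> bool) (g : A -> list B) l :
  filter f (flat_map g l) = flat_map (fun x => filter f (g x)) l.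
Proof. induction l; simpl; auto. rewrite filter_app, IHl. auto. Qed.

Lemma cnt_S m K p n : cnt (S m) K p n =
  list_sum (map (fun z => cnt m K (p - Z.max z 0) (n - Z.max (- z) 0)) (interval K)).
Proof.
  unfold cnt. simpl box. rewrite filter_flat_map, length_flat_map.
  f_equal. apply map_ext. intros z. rewrite filter_map_swap, length_map.
  f_equal. apply filter_ext. intros v. unfold Pred. simpl.
  destruct (Z.leb_spec (Z.max z 0 + pos_sum v) p), (Z.leb_spec (pos_sum v) (p - Z.max z 0));
  destruct (Z.leb_spec (Z.max (- z) 0 + neg_sum v) n), (Z.leb_spec (neg_sum v) (n - Z.max (- z) 0));
  simpl; auto; lia.
Qed.

Lemma list_sum_zero {A} (f : A -> nat) l : (forall x, In x l -> f x = 0%nat) -> list_sum (map f l) = 0%nat.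
Proof. induction l; simpl; intros H; auto. rewrite H, IHl; auto. Qed.

Lemma map_seq_shift {A} (f : nat -> A) a len : map f (seq a len) = map (fun j => f (a + j)%nat) (seq 0 len).
Proof.
  revert a; induction len as [|len IH]; intros a; simpl; auto.
  rewrite Nat.add_0_r. f_equal. rewrite IH, <- seq_shift, map_map. apply map_ext. intros j. f_equal. lia.
Qed.

Lemma cnt_F m K p n : (p + n <= K)%nat -> cnt m K (Z.of_nat p) (Z.of_nat n) = Comb.Fm m p n.
Proof.
  revert p n. induction m as [|m IH]; intros p n Hk.
  - rewrite Comb.F0_std. unfold cnt. simpl. unfold Pred. simpl.
    rewrite (proj2 (Z.leb_le 0 _)) by lia. rewrite (proj2 (Z.leb_le 0 _)) by lia. reflexivity.
  - rewrite cnt_S, Comb.F_rec_std. unfold interval. rewrite map_map.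
    replace (2 * K + 1)%nat with ((K - n) + (S n + (p + (K - p))))%nat by lia.
    rewrite !seq_app, !map_app, !list_sum_app.
    rewrite list_sum_zero with (l := seq 0 (K - n)).
    2:{ intros i Hi. apply in_seq in Hi. apply cnt_neg. lia. }
    rewrite list_sum_zero with (l := seq _ (K - p)).
    2:{ intros i Hi. apply in_seq in Hi. apply cnt_neg. lia. }
    rewrite (map_seq_shift _ (0 + (K - n))), (map_seq_shift _ (0 + (K - n) + S n)).
    rewrite (Comb.sum_rev (fun z => Comb.Fm m z n) p).
    rewrite (map_ext_in _ (fun j => Comb.Fm m p j) (seq 0 (S n))).
    2:{ intros j Hj. apply in_seq in Hj. rewrite <- IH by lia. f_equal; lia. }
    rewrite (map_ext_in _ (fun j => Comb.Fm m (p - 1 - j) n) (seq 0 p)).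
    2:{ intros j Hj. apply in_seq in Hj. rewrite <- IH by lia. f_equal; lia. }
    unfold ssrnat.addn, ssrnat.subn. lia.
Qed.

Lemma S_card_F m rp rn : S_card m rp rn = Comb.Fm m rp rn.
Proof. rewrite S_card_cnt. apply cnt_F. lia. Qed.

Definition vadd (x s : list Z) : list Z := map (fun p => (fst p + snd p)%Z) (combine x s).

Lemma vadd_len x s : length x = length s -> length (vadd x s) = length x.
Proof. intros H. unfold vadd. rewrite length_map, length_combine, H. lia. Qed.

Lemma vadd_bnd x s k R : length x = length s -> Forall (bnd k) x -> Forall (bnd R) s ->
  Forall (bnd (k + R)) (vadd x s).
Proof.
  revert s; induction x as [|a x IH]; intros s Hl Hx Hs; destruct s as [|b s]; simpl in *;
  try discriminate; constructor.
  - inversion Hx; inversion Hs; subst. unfold bnd in *. simpl. lia.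
  - inversion Hx; inversion Hs; subst. apply IH; auto.
Qed.

Lemma vadd_inj x s s' : length s = length x -> length s' = length x -> vadd x s = vadd x s' -> s = s'.
Proof.
  revert s s'; induction x as [|a x IH]; intros s s' H1 H2 H; destruct s as [|b s]; destruct s' as [|b' s'];
  simpl in *; try discriminate; auto.
  inversion H. f_equal. lia. apply IH; auto.
Qed.

Lemma vadd_sub x y s s' : length s = length x -> length s' = length x -> length y = length x ->
  vadd x s = vadd y s' -> vsub x y = vsub s' s.
Proof.
  revert y s s'; induction x as [|a x IH]; intros y s s' H1 H2 H3 H;
  destruct s as [|b s]; destruct s' as [|b' s']; destruct y as [|c y];
  simpl in *; try discriminate; auto.
  inversion H. unfold vsub in *. simpl. f_equal. lia. apply IH; auto.
Qed.

Lemma vsub_pos a b : length a = length b ->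
  (pos_sum (vsub b a) <= pos_sum b + neg_sum a /\ neg_sum (vsub b a) <= neg_sum b + pos_sum a)%Z.
Proof.
  revert b; induction a as [|x a IH]; intros b H; destruct b as [|y b]; simpl in *; try discriminate.
  - unfold vsub; simpl; lia.
  - unfold vsub in *. simpl. destruct (IH b) as [H1 H2]; auto. lia.
Qed.

Lemma decP_true P : decP P = true -> P.
Proof. unfold decP. destruct (excluded_middle_informative P); auto. discriminate. Qed.

Lemma pack m C d rp rn k : is_code m C -> min_dist C d -> (rp + rn < d)%nat ->
  (count_in_box m C k * S_card m rp rn <= (2 * (k + (rp + rn)) + 1) ^ m)%nat.
Proof.
  intros Hc [Hd _] Hr. set (R := (rp + rn)%nat).
  set (Cb := filter (fun x => decP (C x)) (box m k)).
  set (Sl := filter (Pred (Z.of_nat rp) (Z.of_nat rn)) (box m R)).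
  set (L := flat_map (fun x => map (vadd x) Sl) Cb).
  assert (HL : length L = (length Cb * length Sl)%nat).
  { apply length_flat_map_const. intros; apply length_map. }
  unfold count_in_box, S_card. fold Cb. fold R. change (length Cb * length Sl <= (2*(k+R)+1)^m)%nat. rewrite <- HL, <- length_box.
  assert (HSl : forall s, In s Sl -> length s = m /\ Forall (bnd R) s /\
     (pos_sum s <= Z.of_nat rp)%Z /\ (neg_sum s <= Z.of_nat rn)%Z).
  { intros s Hs. unfold Sl in Hs. apply filter_In in Hs. destruct Hs as [Hs HP].
    apply in_box in Hs. unfold Pred in HP. apply andb_prop in HP. destruct HP as [H1 H2].
    apply Z.leb_le in H1, H2. tauto. }
  assert (HCb : forall x, In x Cb -> length x = m /\ Forall (bnd k) x /\ C x).
  { intros x Hx. unfold Cb in Hx. apply filter_In in Hx. destruct Hx as [Hx HP].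
    apply in_box in Hx. apply decP_true in HP. tauto. }
  apply NoDup_incl_length.
  - apply NoDup_flat_map'.
    + apply NoDup_filter, NoDup_box.
    + intros x Hx. apply NoDup_map_inj.
      * intros s s' Hs Hs' E. destruct (HCb x Hx) as [Hlx _]. apply (vadd_inj x).
        rewrite Hlx. apply HSl; auto. rewrite Hlx. apply HSl; auto. auto.
      * apply NoDup_filter, NoDup_box.
    + intros x y b Hx Hy Hbx Hby. apply in_map_iff in Hbx, Hby.
      destruct Hbx as [s [Es Hs]]. destruct Hby as [s' [Es' Hs']].
      destruct (classic (x = y)) as [|Hne]; auto. exfalso.
      destruct (HCb x Hx) as [Hlx [_ Cx]]. destruct (HCb y Hy) as [Hly [_ Cy]].
      destruct (HSl s Hs) as [Hls [_ [Hps Hns]]]. destruct (HSl s' Hs') as [Hls' [_ [Hps' Hns']]].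
      pose proof (Hd x y Cx Cy Hne) as Hdist.
      assert (E : vsub x y = vsub s' s).
      { apply vadd_sub; try congruence. }
      unfold d_a in Hdist. rewrite E in Hdist.
      destruct (vsub_pos s s') as [P1 P2]; [congruence|]. lia.
  - intros b Hb. apply in_flat_map in Hb. destruct Hb as [x [Hx Hb]].
    apply in_map_iff in Hb. destruct Hb as [s [<- Hs]].
    destruct (HCb x Hx) as [Hlx [Bx _]]. destruct (HSl s Hs) as [Hls [Bs _]].
    apply in_box. split.
    + rewrite vadd_len; congruence.
    + apply vadd_bnd; auto. congruence.
Qed.

Open Scope R_scope.

Lemma div_lt x y c : 0 < c -> x < y * c -> x / c < y.
Proof. intros Hc H. apply Rmult_lt_reg_r with c; auto. unfold Rdiv. rewrite Rmult_assoc, Rinv_l by lra. lra. Qed.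

Lemma lt_div x y c : 0 < c -> x / c < y -> x < y * c.
Proof.
  intros Hc H. replace x with (x / c * c) by (field; lra). apply Rmult_lt_compat_r; auto.
Qed.

Lemma bern m x : 0 <= x <= 1 -> (1 + x) ^ m <= 1 + (2 ^ m - 1) * x.
Proof.
  intros Hx. induction m as [|m IH]; simpl. lra.
  assert (Ha : 1 <= 2 ^ m) by (apply pow_R1_Rle; lra).
  set (a := 2 ^ m - 1) in *. set (Y := (1 + x) ^ m) in *.
  assert (H1 : (1 + x) * Y <= (1 + x) * (1 + a * x)) by (apply Rmult_le_compat_l; lra).
  assert (H2 : a * (x * x) <= a * x).
  { apply Rmult_le_compat_l. unfold a; lra. replace x with (x * 1) at 3 by ring.
    apply Rmult_le_compat_l; lra. }
  replace (2 * 2 ^ m - 1) with (2 * a + 1) by (unfold a; ring).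
  nra.
Qed.

Lemma real_bound c G D R2 m : 0 < G -> 0 < D -> 0 <= R2 <= D -> c * G <= (D + R2) ^ m ->
  c / D ^ m <= / G + 2 ^ m * R2 / G / D.
Proof.
  intros HG HD HR Hc.
  assert (Hx : 0 <= R2 / D <= 1).
  { split. apply Rmult_le_pos; [lra | left; apply Rinv_0_lt_compat; lra].
    apply Rmult_le_reg_r with D; auto. unfold Rdiv. rewrite Rmult_assoc, Rinv_l by lra. lra. }
  assert (HX : (D + R2) ^ m = D ^ m * (1 + R2 / D) ^ m).
  { rewrite <- Rpow_mult_distr. f_equal. field. lra. }
  pose proof (bern m (R2 / D) Hx) as HB.
  assert (HP : 0 < D ^ m) by (apply pow_lt; lra).
  set (X := (1 + R2 / D) ^ m) in *. set (P := D ^ m) in *.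
  assert (H1 : c / P <= X / G).
  { apply Rmult_le_reg_r with (P * G). nra.
    replace (c / P * (P * G)) with (c * G) by (field; lra).
    replace (X / G * (P * G)) with (P * X) by (field; lra). lra. }
  assert (H2 : X / G <= (1 + 2 ^ m * (R2 / D)) / G).
  { unfold Rdiv. apply Rmult_le_compat_r. left; apply Rinv_0_lt_compat; lra.
    assert (0 <= R2 * / D) by (destruct Hx; auto). lra. }
  replace (/ G + 2 ^ m * R2 / G / D) with ((1 + 2 ^ m * (R2 / D)) / G) by (field; lra).
  lra.
Qed.

Lemma limsup_le (u : nat -> R) mu a b N0 : 0 <= b ->
  (forall n, (n >= N0)%nat -> u n <= a + b / (INR n + 1)) -> is_limsup u mu -> mu <= a.
Proof.
  intros Hb Hu Hl. destruct (Rle_or_lt mu a) as [|Hlt]; auto. exfalso.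
  set (eps := (mu - a) / 2). assert (He : eps > 0) by (unfold eps; lra).
  destruct (Hl eps He) as [_ H2].
  destruct (INR_unbounded (b / eps)) as [N1 HN1].
  destruct (H2 (max N0 N1)) as [n [Hn Hun]].
  assert (HnN1 : INR N1 <= INR n) by (apply le_INR; lia).
  assert (Hn0 : 0 <= INR n) by apply pos_INR.
  pose proof (Hu n ltac:(lia)) as Hun'.
  assert (Hb1 : b < INR N1 * eps) by (apply lt_div; auto).
  assert (Hb2 : b / (INR n + 1) < eps) by (apply div_lt; nra).
  unfold eps in *. lra.
Qed.

Lemma S_card_pos m rp rn : 0 < INR (S_card m rp rn).
Proof. rewrite S_card_F. apply lt_0_INR. apply Comb.Fm_pos_std. Qed.

Lemma part_i m C d rp rn mu : is_code m C -> min_dist C d -> (rp + rn < d)%nat ->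
  upper_density m C mu -> mu <= / INR (S_card m rp rn).
Proof.
  intros Hc Hd Hr Hmu.
  pose proof (S_card_pos m rp rn) as HG. set (G := INR (S_card m rp rn)) in *.
  set (R := (rp + rn)%nat).
  apply (limsup_le (density_seq m C) mu (/ G) (2 ^ m * INR (2 * R) / G) R).
  - unfold Rdiv. apply Rmult_le_pos. apply Rmult_le_pos. apply pow_le; lra. apply pos_INR.
    left; apply Rinv_0_lt_compat; auto.
  - intros n Hn. unfold density_seq.
    pose proof (pack m C d rp rn n Hc Hd Hr) as Hp.
    apply le_INR in Hp. rewrite mult_INR, pow_INR in Hp.
    set (D := INR (2 * n + 1)).
    assert (HD : INR n + 1 <= D) by (unfold D; rewrite plus_INR, mult_INR; simpl; pose proof (pos_INR n); lra).
    assert (HR : 0 <= INR (2 * R) <= D).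
    { split. apply pos_INR. unfold D. apply le_INR. fold R in Hn. lia. }
    assert (E : INR (2 * (n + R) + 1) = D + INR (2 * R)).
    { unfold D. rewrite <- plus_INR. f_equal. lia. }
    fold R in Hp. rewrite E in Hp. fold G in Hp.
    pose proof (real_bound _ G D (INR (2 * R)) m HG ltac:(pose proof (pos_INR n); lra) HR Hp) as Hb.
    eapply Rle_trans; [apply Hb|].
    apply Rplus_le_compat_l. unfold Rdiv. apply Rmult_le_compat_l.
    + apply Rmult_le_pos. apply Rmult_le_pos. apply pow_le; lra. apply pos_INR.
      left; apply Rinv_0_lt_compat; auto.
    + apply Rinv_le_contravar; auto. pose proof (pos_INR n); lra.
  - exact Hmu.
Qed.

Lemma inv_lt G X Y : 0 < G -> 0 < Y -> Y < X * G -> / G < X / Y.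
Proof.
  intros HG HY H. apply Rmult_lt_reg_r with (G * Y). nra.
  replace (/ G * (G * Y)) with Y by (field; lra).
  replace (X / Y * (G * Y)) with (X * G) by (field; lra). lra.
Qed.

Lemma inv_lt2 G X Y Z : 0 < G -> 0 < Y -> 0 < Z -> Y * Z < X * G -> / G < X / Y / Z.
Proof.
  intros HG HY HZ H. replace (X / Y / Z) with (X / (Y * Z)) by (field; lra).
  apply inv_lt; auto. nra.
Qed.

Theorem mainTheorem7 (m : nat) (C : list Z -> Prop) (d : nat) :
  (1 <= m)%nat -> is_code m C -> min_dist C d ->
  (forall rp rn : nat, (rp + rn < d)%nat ->
     forall mu, upper_density m C mu -> mu <= / INR (S_card m rp rn))
  /\
  ((2 <= d <= 2 * m + 1)%nat ->
     forall mu, upper_density m C mu ->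
       mu < INR (fact (d / 2)) * INR (fact ((d - 1) / 2))
            / INR (m + 1 - d / 2) ^ (d - 1))
  /\
  ((m < d)%nat ->
     forall mu, upper_density m C mu ->
       mu < 2 ^ m * INR (fact m) ^ 3 / INR (fact (2 * m)) / INR (d - m) ^ m).
Proof.
  intros Hm Hc Hd. split; [|split].
  - intros rp rn Hr mu Hmu. eapply part_i; eauto.
  - intros [Hd1 Hd2] mu Hmu.
    pose proof (Nat.div_mod d 2 ltac:(lia)) as E1. pose proof (Nat.mod_upper_bound d 2 ltac:(lia)) as E2.
    pose proof (Nat.div_mod (d - 1) 2 ltac:(lia)) as E3. pose proof (Nat.mod_upper_bound (d - 1) 2 ltac:(lia)) as E4.
    set (a := (d / 2)%nat) in *. set (b := ((d - 1) / 2)%nat) in *.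
    assert (Hab : (a + b = d - 1)%nat) by lia.
    assert (Ha1 : (0 < a)%nat) by lia. assert (Ha2 : (a <= m)%nat) by lia.
    pose proof (part_i m C d a b mu Hc Hd ltac:(lia) Hmu) as Hi.
    pose proof (@Comb.ii_std m a b Ha1 Ha2) as Hn.
    unfold ssrnat.subn, ssrnat.addn, ssrnat.muln in Hn.
    rewrite S_card_F in Hi.
    eapply Rle_lt_trans; [apply Hi|].
    replace (d - 1)%nat with (a + b)%nat by lia.
    replace (m + 1 - a)%nat with (S m - a)%nat by lia.
    rewrite <- pow_INR, <- mult_INR.
    apply inv_lt. apply lt_0_INR, Comb.Fm_pos_std.
    rewrite pow_INR. apply pow_lt. apply lt_0_INR. lia.
    rewrite <- mult_INR. apply lt_INR. exact Hn.
  - intros Hmd mu Hmu.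
    set (t := (d - m)%nat).
    pose proof (Nat.div_mod t 2 ltac:(lia)) as E1. pose proof (Nat.mod_upper_bound t 2 ltac:(lia)) as E2.
    set (n := (t / 2)%nat) in *. set (p := (d - 1 - n)%nat).
    pose proof (part_i m C d p n mu Hc Hd ltac:(unfold p, t in *; lia) Hmu) as Hi.
    pose proof (@Comb.iii_std m p n t ltac:(lia) ltac:(unfold ssrnat.muln; lia)
       ltac:(unfold ssrnat.muln, ssrnat.subn, p, t in *; lia)) as Hn.
    unfold ssrnat.subn, ssrnat.addn, ssrnat.muln in Hn.
    rewrite S_card_F in Hi.
    eapply Rle_lt_trans; [apply Hi|].
    apply inv_lt2.
    + apply lt_0_INR, Comb.Fm_pos_std.
    + apply lt_0_INR. apply lt_O_fact.
    + apply pow_lt. apply lt_0_INR. unfold t; lia.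
    + replace 2 with (INR 2) by (simpl; lra).
      rewrite <- !pow_INR, <- !mult_INR. apply lt_INR. exact Hn.
Qed.
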